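(* Assume the standing hypotheses described in the context. If $x,y\in\mathbb X$, $\|x-x_0\|\le t$, $\|y-x\|\le s$ and $s+t<R$ (with $s,t\ge 0$), then \[\|F'(x_0)^{-1}E_F(y,x)\|\le e_f(t+s,t),\] and, if $s\neq0$, \[\|F'(x_0)^{-1}E_F(y,x)\|\le\frac12\,\frac{f'(s+t)-f'(t)}{s}\,\|y-x\|^2.\]
   Context: Standing hypotheses: $\mathbb X,\mathbb Y$ are Banach spaces; $B(x,r)$ is the open ball. $R\in\mathbb R$, $C\subseteq\mathbb X$, $F:C\to\mathbb Y$ is continuous and continuously differentiable on $\mathrm{int}(C)$, $x_0\in\mathrm{int}(C)$ with $F'(x_0)$ non-singular, $f:[0,R)\to\mathbb R$ is continuously differentiable, $B(x_0,R)\subseteq C$, $\|F'(x_0)^{-1}[F'(y)-F'(x)]\|\le f'(\|y-x\|+\|x-x_0\|)-f'(\|x-x_0\|)$ for all $x,y\in B(x_0,R)$ with $\|x-x_0\|+\|y-x\|<R$, $\|F'(x_0)^{-1}F(x_0)\|\le f(0)$, and (h1) $f(0)>0$, $f'(0)=-1$; (h2) $f'$ is strictly increasing and convex; (h3) $f(t)<0$ for some $t\in(0,R)$. Linearization errors: $E_F(y,x):=F(y)-[F(x)+F'(x)(y-x)]$ for $x\in B(x_0,R)$, $y\in C$; $e_f(v,t):=f(v)-[f(t)+f'(t)(v-t)]$ for $t,v\in[0,R)$. *)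

(* Defs.v *)
From HB Require Import structures.
From mathcomp Require Import all_boot all_order all_algebra.
From mathcomp Require Import all_classical all_reals all_analysis.
Set Implicit Arguments. Unset Strict Implicit. Unset Printing Implicit Defensive.
Import Order.TTheory GRing.Theory Num.Theory.
Import numFieldNormedType.Exports.
Local Open Scope classical_set_scope.
Local Open Scope ring_scope.

Section Defs.
Variable R : realType.

Definition opnorm (X Y : normedModType R) (L : X -> Y) : R :=
  sup [set `|L u| | u in [set u : X | `|u| <= 1]].

Definition C1_on (X Y : normedModType R) (A : set X) (F : X -> Y) : Prop :=
  (forall x, A x -> differentiable F x) /\
  (forall x, A x -> forall e : R, 0 < e -> exists2 d : R, 0 < d &
     forall y, A y -> `|y - x| < d ->
       opnorm (fun u => 'd F y u - 'd F x u) < e).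

(* df t is the derivative of f at t relative to the set A
   (one-sided at boundary points of A, e.g. at 0 for A = [0,R)). *)
Definition has_derivative_within (A : set R) (f : R -> R) (t dft : R) : Prop :=
  (fun v => (f v - f t) / (v - t)) @ within (A `\ t) (nbhs t) --> dft.

Definition E_F (X Y : normedModType R) (F : X -> Y) (y x : X) : Y :=
  F y - (F x + 'd F x (y - x)).

Definition e_f (f df : R -> R) (v t : R) : R :=
  f v - (f t + df t * (v - t)).

End Defs.

(* Main.v *)
Require Import Defs.
From HB Require Import structures.
From mathcomp Require Import all_boot all_order all_algebra.
From mathcomp Require Import all_classical all_reals all_analysis.
From mathcomp Require Import ring lra.
Import Order.TTheory GRing.Theory Num.Theory.
Import numFieldNormedType.Exports.
Local Open Scope classical_set_scope.
Local Open Scope ring_scope.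
Lemma creep (K : realType) (a b : K) (g : K -> K) : a <= b ->
 (forall tau, a < tau -> tau <= b -> forall eta, 0 < eta -> exists2 d, 0 < d &
    forall sg, a <= sg -> tau - d < sg -> sg <= tau -> g tau - g sg < eta) ->
 (forall tau, a <= tau -> tau < b -> forall eps, 0 < eps -> exists2 d, 0 < d &
    forall sg, tau < sg -> sg < tau + d -> g sg - g tau <= eps * (sg - tau)) ->
 g b <= g a.
Proof.
move=> ab Hl Hr.
suff H : forall eps, 0 < eps -> g b <= g a + eps * (b - a).
  apply/ler_addgt0Pr => e e0.
  have h1 : 0 < b - a + 1 by lra.
  set c := e / (b - a + 1).
  have c0 : 0 < c by rewrite divr_gt0.
  have hc : c * (b - a + 1) = e by rewrite /c divfK // gt_eqF.
  have := H c c0.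
  have -> : c * (b - a) = e - c by rewrite -hc; ring.
  lra.
move=> eps eps0.
pose w t := g t - g a - eps * (t - a).
pose A := [set t | a <= t <= b /\ w t <= 0].
have Aa : A a by rewrite /A /w /=; split; [rewrite lexx ab | lra].
have hsA : has_sup A by split; [exists a | exists b => t [/andP[_ ->]]].
set m := sup A.
have am : a <= m by apply: sup_upper_bound.
have mb : m <= b by apply: ge_sup; [exists a | move=> t [/andP[_ ->]]].
have Am : w m <= 0.
  have [ma|ma] := eqVneq m a; first by rewrite ma /w; lra.
  have am' : a < m by rewrite lt_neqAle eq_sym ma am.
  rewrite leNgt; apply/negP => wm0.
  have [d d0 Hd] := Hl m am' mb (w m / 2) (divr_gt0 wm0 (ltr0Sn _ 1)).
  have [sg Asg lsg] := sup_adherent d0 hsA.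
  move: (Asg) => [/andP[asg _] wsg].
  have sgm : sg <= m by apply: sup_upper_bound.
  have := Hd sg asg lsg sgm.
  rewrite /w in wsg wm0 *.
  have : 0 <= eps * (m - sg) by rewrite mulr_ge0 ?subr_ge0 // ltW.
  lra.
have mb' : m = b.
  apply/eqP; rewrite eq_le mb /=; rewrite leNgt; apply/negP => mlb.
  have [d d0 Hd] := Hr m am mlb eps eps0.
  pose sg := m + Num.min d (b - m) / 2.
  have mn0 : 0 < Num.min d (b - m) by rewrite lt_min d0 subr_gt0 mlb.
  have mnd : Num.min d (b - m) <= d by rewrite ge_min lexx.
  have mnb : Num.min d (b - m) <= b - m by rewrite ge_min lexx orbT.
  have h1 : m < sg by rewrite /sg; lra.
  have h2 : sg < m + d by rewrite /sg; lra.
  have Hs := Hd sg h1 h2.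
  have : A sg.
    split; first by apply/andP; split; rewrite /sg; lra.
    rewrite /w; move: Am; rewrite /w; move: Hs; lra.
  move=> /sup_upper_bound => /(_ hsA); rewrite -/m; lra.
by move: Am; rewrite mb' /w; lra.
Qed.
Section Cvx.
Variables (K : realType) (Rr : K) (g : K -> K).
Hypothesis h2inc : forall a b, 0 <= a -> a < b -> b < Rr -> g a < g b.
Hypothesis h2cvx : forall a b l, 0 <= a < Rr -> 0 <= b < Rr -> 0 <= l <= 1 ->
     g (l * a + (1 - l) * b) <= l * g a + (1 - l) * g b.

Lemma gmono a b : 0 <= a -> a <= b -> b < Rr -> g a <= g b.
Proof.
move=> a0 ab bR; have [->|nab] := eqVneq a b; first by [].
by apply: ltW; apply: h2inc => //; rewrite lt_neqAle nab ab.
Qed.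

Lemma cvx3 p q r : 0 <= p -> p <= q -> q <= r -> r < Rr ->
  (r - p) * g q <= (r - q) * g p + (q - p) * g r.
Proof.
move=> p0 pq qr rR.
have [rp|rp] := eqVneq r p.
  have qp : q = p by apply/eqP; rewrite eq_le pq andbT -rp.
  by rewrite rp qp !subrr !mul0r addr0.
have D0 : 0 < r - p by rewrite subr_gt0 lt_neqAle eq_sym rp (le_trans pq qr).
set l := (r - q) / (r - p).
have l0 : 0 <= l by apply: divr_ge0; [rewrite subr_ge0 | apply: ltW].
have l1 : l <= 1 by rewrite ler_pdivrMr // mul1r; lra.
have hq : l * p + (1 - l) * r = q.
  rewrite /l; field; by rewrite gt_eqF.
have H1 : 0 <= p < Rr by rewrite p0 /=; lra.
have H2 : 0 <= r < Rr by apply/andP; split; lra.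
have H3 : 0 <= l <= 1 by rewrite l0 l1.
have H := h2cvx p r l H1 H2 H3; rewrite hq in H.
have e1 : (r - p) * l = r - q by rewrite /l mulrC divfK // gt_eqF.
have e2 : (r - p) * (1 - l) = q - p by rewrite mulrBr mulr1 e1; ring.
have E : (r - p) * (l * g p + (1 - l) * g r) = (r - q) * g p + (q - p) * g r.
  by rewrite mulrDr mulrA e1 mulrA e2.
by rewrite -E; apply: ler_wpM2l => //; apply: ltW.
Qed.

Lemma incr_mono a t d : 0 <= a -> a <= t -> 0 <= d -> t + d < Rr ->
  g (a + d) - g a <= g (t + d) - g t.
Proof.
move=> a0 at' d0 tdR.
have [D0|Dn] := eqVneq (t + d - a) 0.
  have -> : d = 0 by lra.
  have -> : t = a by lra.
  by rewrite lexx.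
have Dp : 0 < t + d - a by rewrite lt_neqAle eq_sym Dn /=; lra.
have H1 := cvx3 (a) (a + d) (t + d) a0 ltac:(lra) ltac:(lra) tdR.
have H2 := cvx3 (a) (t) (t + d) a0 at' ltac:(lra) tdR.
have H3 : (t + d - a) * (g (a + d) - g a - (g (t + d) - g t)) <= 0.
  move: H1 H2; have -> : t + d - (a + d) = t - a by ring.
  have -> : a + d - a = d by ring.
  have -> : t + d - t = d by ring.
  move=> H1 H2. nra.
rewrite -subr_le0; move: H3; rewrite pmulr_rle0 //.
Qed.

Lemma slope_le t d s : 0 <= t -> 0 <= d -> d <= s -> 0 < s -> t + s < Rr ->
  g (t + d) - g t <= d * ((g (t + s) - g t) / s).
Proof.
move=> t0 d0 ds s0 tsR.
have H := cvx3 (t) (t + d) (t + s) t0 ltac:(lra) ltac:(lra) tsR.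
move: H; have -> : t + s - t = s by ring.
have -> : t + s - (t + d) = s - d by ring.
have -> : t + d - t = d by ring.
move=> H.
rewrite mulrA ler_pdivlMr //.
nra.
Qed.
End Cvx.

Lemma lin_bound (K : realType) (X Y : normedModType K) (L : {linear X -> Y}) :
  continuous L -> exists2 M : K, 0 < M & forall u, `|L u| <= M * `|u|.
Proof.
move=> /linear_bounded_continuous /linear_boundedP /pinfty_ex_gt0 [M M0 HM].
by exists M.
Qed.

Lemma scal_bound (K : realType) (X Y : normedModType K) (g : Y -> X) :
  (forall (c : K) w, g (c *: w) = c *: g w) -> {for 0, continuous g} ->
  exists2 M : K, 0 < M & forall w, `|g w| <= M * `|w|.
Proof.
move=> gZ gc.
have g0 : g 0 = 0 by rewrite -(scale0r (0:Y)) gZ scale0r.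
have := cvgr_dist_lt _ _ gc 1 ltr01.
rewrite g0 => H0; have /nbhs_norm0P [d /= d0 Hd] := H0 (nbhs_filter 0).
exists (2 / d); first by rewrite divr_gt0.
move=> w; have [->|wn] := eqVneq w 0; first by rewrite g0 !normr0 mulr0.
have nw : 0 < `|w| by rewrite normr_gt0.
set c := d / (2 * `|w|).
have c0 : 0 < c by rewrite divr_gt0 // mulr_gt0.
have : `|c *: w| < d.
  rewrite normrZ gtr0_norm //.
  have -> : c * `|w| = d / 2 by rewrite /c; field; rewrite gt_eqF.
  lra.
move=> /Hd /=; rewrite sub0r normrN gZ normrZ gtr0_norm // => H.
have -> : 2 / d * `|w| = c^-1.
  by rewrite /c; field; rewrite !gt_eqF.
by apply: ltW; rewrite -(ltr_pM2l c0) mulfV ?gt_eqF.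
Qed.

Lemma opnorm_le (K : realType) (X Y : normedModType K) (L : X -> Y) :
  (forall (c : K) u, L (c *: u) = c *: L u) ->
  (exists B : K, forall u, `|L u| <= B * `|u|) ->
  forall u, `|L u| <= opnorm L * `|u|.
Proof.
move=> LZ [B HB] u.
have L0 : L 0 = 0 by rewrite -(scale0r (0:X)) LZ scale0r.
set S := [set `|L v| | v in [set v : X | `|v| <= 1]].
have hS : has_sup S.
  split; first by exists `|L 0|; exists 0 => //=; rewrite normr0.
  exists `|B| => _ [v /= v1 <-].
  apply: (le_trans (HB v)).
  apply: (le_trans (ler_wpM2r (normr_ge0 v) (ler_norm B))).
  by rewrite -[X in _ <= X]mulr1 ler_wpM2l.
have [->|un] := eqVneq u 0; first by rewrite L0 !normr0 mulr0.
have nu : 0 < `|u| by rewrite normr_gt0.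
have : S `|L (`|u|^-1 *: u)|.
  exists (`|u|^-1 *: u); last by []. rewrite /= normrZ ger0_norm ?invr_ge0 ?normr_ge0 // mulVf // gt_eqF //.
move=> /(sup_upper_bound hS).
rewrite LZ normrZ ger0_norm ?invr_ge0 ?normr_ge0 //.
by rewrite ler_pdivrMl // mulrC.
Qed.

Lemma MVI (K : realType) (u v b : K -> K) :
  (forall tau, 0 <= tau <= 1 -> forall eps : K, 0 < eps -> exists2 d : K, 0 < d &
     forall r, `|r| < d -> `|u (tau + r) - u tau| <= `|r| * (b tau + eps)) ->
  (forall tau, 0 <= tau -> tau < 1 -> forall eps : K, 0 < eps -> exists2 d : K, 0 < d &
     forall sg, tau < sg -> sg < tau + d -> (sg - tau) * (b tau - eps) <= v sg - v tau) ->
  (forall tau, 0 < tau -> tau <= 1 -> forall eta : K, 0 < eta -> exists2 d : K, 0 < d &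
     forall sg, 0 <= sg -> tau - d < sg -> sg <= tau -> v sg - v tau < eta) ->
  u 1 - u 0 <= v 1 - v 0.
Proof.
move=> Hu Hvr Hvl.
suff : (fun t => u t - v t) 1 <= (fun t => u t - v t) 0 by move=> /=; lra.
apply: (@creep K 0 1 (fun t => u t - v t)); first exact: ler01.
- move=> tau t0 t1 eta eta0.
  have tt : 0 <= tau <= 1 by apply/andP; split; lra.
  have [d1 d10 H1] := Hu tau tt 1 ltr01.
  have e2 : 0 < eta / 2 by lra.
  have [d2 d20 H2] := Hvl tau t0 t1 (eta / 2) e2.
  set c := `|b tau| + 2.
  have c0 : 0 < c by rewrite /c; have := normr_ge0 (b tau); lra.
  set d3 := eta / (2 * c).
  have d30 : 0 < d3 by rewrite divr_gt0 // mulr_gt0.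
  exists (Num.min d1 (Num.min d2 d3)).
    by rewrite !lt_min d10 d20 d30.
  move=> sg sg0 hsg sgt.
  have m1 : Num.min d1 (Num.min d2 d3) <= d1 by rewrite ge_min lexx.
  have m2 : Num.min d1 (Num.min d2 d3) <= d2 by rewrite !ge_min lexx orbT.
  have m3 : Num.min d1 (Num.min d2 d3) <= d3 by rewrite !ge_min lexx !orbT.
  have r1 : `|sg - tau| < d1 by rewrite ler0_norm ?subr_le0 //; lra.
  have := H1 (sg - tau) r1; rewrite addrCA subrr addr0 => Hu1.
  have := H2 sg sg0 ltac:(lra) sgt => Hv1.
  have r3 : `|sg - tau| < d3 by rewrite ler0_norm ?subr_le0 //; lra.
  have A1 : b tau + 1 <= c by rewrite /c; have := ler_norm (b tau); lra.
  have A2 := ler_wpM2l (normr_ge0 (sg - tau)) A1.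
  have A3 := ler_wpM2r (ltW c0) (ltW r3).
  have A4 : d3 * c = eta / 2 by rewrite /d3; field; rewrite gt_eqF.
  rewrite distrC in Hu1.
  have := ler_norm (u tau - u sg).
  rewrite /=; lra.
- move=> tau t0 t1 eps eps0.
  have tt : 0 <= tau <= 1 by apply/andP; split; lra.
  have e2 : 0 < eps / 2 by lra.
  have [d1 d10 H1] := Hu tau tt (eps / 2) e2.
  have [d2 d20 H2] := Hvr tau t0 t1 (eps / 2) e2.
  exists (Num.min d1 d2); first by rewrite lt_min d10 d20.
  move=> sg h1 h2.
  have m1 : Num.min d1 d2 <= d1 by rewrite ge_min lexx.
  have m2 : Num.min d1 d2 <= d2 by rewrite ge_min lexx orbT.
  have r1 : `|sg - tau| < d1 by rewrite gtr0_norm ?subr_gt0 //; lra.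
  have rpos : 0 < sg - tau by rewrite subr_gt0.
  have := H1 (sg - tau) r1; rewrite addrCA subrr addr0 (gtr0_norm rpos) => Hu1.
  have Hv1 := H2 sg h1 ltac:(lra).
  have := ler_norm (u sg - u tau).
  rewrite /=; lra.
Qed.
Lemma zid (V : zmodType) (a b c p q w : V) :
  a - (b + (p + q)) - (c - (b + p)) = (a - (c + w)) + (w - q).
Proof.
rewrite !opprD !opprK.
rewrite (addrC (-b)) (addrC _ (b + p)) -!addrA. 
congr (_ + _). rewrite addKr (addrCA (-q)) addKr addKr.
by rewrite addrC.
Qed.
Lemma Dfb (K : realType) (A : set K) (f : K -> K) (p l : K) :
  has_derivative_within A f p l -> forall eps : K, 0 < eps -> exists2 d : K, 0 < d &
  forall v, A v -> `|v - p| < d -> `|f v - f p - l * (v - p)| <= eps * `|v - p|.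
Proof.
move=> H eps eps0.
have := cvgr_dist_lt _ _ H eps eps0.
move=> H0; have := H0 (within_filter _ _).
move=> H1; have := H1 (nbhs_filter p).
rewrite /within => H2.
have [d /= d0 Hd] := (nbhs_normP _ _).1 H2.
exists d => // v Av vd.
have [->|vp] := eqVneq v p; first by rewrite !subrr !mulr0 ?subr0 !normr0 ?mulr0.
have vp' : v - p != 0 by rewrite subr_eq0.
have vpP : v <> p by move/eqP: vp.
have Hv := Hd v ltac:(rewrite /ball_ /= distrC; exact: vd) (conj Av vpP).
have -> : f v - f p - l * (v - p) = ((f v - f p) / (v - p) - l) * (v - p).
  by rewrite mulrBl divfK.
rewrite normrM ler_wpM2r // distrC; exact: ltW.

Qed.

Lemma DFexp (K : realType) (X Y : normedModType K) (F : X -> Y) (z : X) :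
  differentiable F z -> forall e : K, 0 < e -> exists2 d : K, 0 < d &
   forall k : X, `|k| < d -> `|F (z + k) - (F z + 'd F z k)| <= e * `|k|.
Proof.
move=> dF e e0.
have E := diff_locallyxC dF.
move: E; set o := (X in forall h, _ = _ + X h) => E.
have Lo := littleoP o.
have /nbhs_norm0P [d d0 Hd] := Lo e e0.
exists d => // k kd.
rewrite E addrC addKr. exact: Hd.
Qed.

Theorem corollary3p4
  (K : realType) (X Y : completeNormedModType K)
  (Rr : K) (C : set X) (F : X -> Y) (x0 : X)
  (Finv : Y -> X) (f df : K -> K)
  (* F : C -> Y continuous, C^1 on int(C) *)
  (HFcont : {within C, continuous F})
  (HFC1 : C1_on (interior C) F)
  (Hx0 : interior C x0)
  (* F'(x0) non-singular, with (bounded) inverse Finv *)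
  (HinvL : cancel ('d F x0) Finv)
  (HinvR : cancel Finv ('d F x0))
  (HinvC : continuous Finv)
  (* f : [0,R) -> R continuously differentiable, with derivative df *)
  (Hfder : forall t, 0 <= t < Rr -> has_derivative_within [set v | 0 <= v < Rr] f t (df t))
  (Hdfcont : {within [set v | 0 <= v < Rr], continuous df})
  (HB : ball x0 Rr `<=` C)
  (* majorant condition *)
  (Hmaj : forall x y : X, ball x0 Rr x -> ball x0 Rr y ->
     `|x - x0| + `|y - x| < Rr ->
     opnorm (fun u => Finv ('d F y u - 'd F x u))
       <= df (`|y - x| + `|x - x0|) - df `|x - x0|)
  (HF0 : `|Finv (F x0)| <= f 0)
  (* (h1) *)
  (h1a : 0 < f 0) (h1b : df 0 = -1)
  (* (h2) f' strictly increasing and convex on [0,R) *)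
  (h2inc : forall a b, 0 <= a -> a < b -> b < Rr -> df a < df b)
  (h2cvx : forall a b l, 0 <= a < Rr -> 0 <= b < Rr -> 0 <= l <= 1 ->
     df (l * a + (1 - l) * b) <= l * df a + (1 - l) * df b)
  (* (h3) *)
  (h3 : exists2 t, 0 < t < Rr & f t < 0) :
  forall (x y : X) (s t : K), 0 <= s -> 0 <= t ->
    `|x - x0| <= t -> `|y - x| <= s -> s + t < Rr ->
    `|Finv (E_F F y x)| <= e_f f df (t + s) t /\
    (s != 0 -> `|Finv (E_F F y x)| <= 2^-1 * ((df (s + t) - df t) / s) * `|y - x| ^+ 2).
Proof.
move=> x y s t s0 t0 hx hy hst.
set h := y - x.
pose z (tau : K) := x + tau *: h.
have FinvD : forall a b, Finv (a + b) = Finv a + Finv b.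
  by move=> a b; rewrite -{1}[a]HinvR -{1}[b]HinvR -linearD HinvL.
have FinvB : forall a b, Finv (a - b) = Finv a - Finv b.
  by move=> a b; rewrite -{1}[a]HinvR -{1}[b]HinvR -linearB HinvL.
have FinvZ : forall (c : K) a, Finv (c *: a) = c *: Finv a.
  by move=> c a; rewrite -{1}[a]HinvR -linearZ HinvL.
have [MF MF0 HMF] := @scal_bound K X Y Finv FinvZ (HinvC 0).
have HBi : ball x0 Rr `<=` interior C.
  by rewrite -open_subsetE //; exact: ball_open.
have nzx : forall tau, `|z tau - x| = `|tau| * `|h|.
  by move=> tau; rewrite /z addrC addKr normrZ.
have inball : forall tau, 0 <= tau <= 1 -> ball x0 Rr (z tau).
  move=> tau /andP[ta tb]; rewrite -ball_normE /ball_ /=.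
  have : `|x0 - z tau| <= `|x - x0| + `|z tau - x|.
    by rewrite (distrC x) (distrC (z tau)); exact: ler_distD.
  rewrite nzx ger0_norm //.
  have : tau * `|h| <= s.
    by rewrite -[s]mul1r ler_pM // normr_ge0.
  lra.
have z0 : z 0 = x by rewrite /z scale0r addr0.
have z1 : z 1 = y by rewrite /z scale1r /h addrC subrK.
have dF : forall tau, 0 <= tau <= 1 -> differentiable F (z tau).
  by move=> tau ht; apply: HFC1.1; apply: HBi; apply: inball.
have dFx : differentiable F x by rewrite -z0; apply: dF; rewrite lexx ler01.
pose opn tau := opnorm (fun u => Finv ('d F (z tau) u - 'd F x u)).
have opnle : forall tau, 0 <= tau <= 1 -> forall u,
    `|Finv ('d F (z tau) u - 'd F x u)| <= opn tau * `|u|.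
  move=> tau ht; apply: opnorm_le.
    by move=> c u; rewrite (linearZZ ('d F (z tau))) (linearZZ ('d F x)) -scalerBr FinvZ.
  have [M1 M10 H1] := @lin_bound K X Y _ (diff_continuous (dF tau ht)).
  have [M2 M20 H2] := @lin_bound K X Y _ (diff_continuous dFx).
  exists (MF * (M1 + M2)) => u.
  apply: (le_trans (HMF _)); rewrite -mulrA; apply: ler_wpM2l; first exact: ltW.
  apply: (le_trans (ler_normB _ _)); rewrite mulrDl; exact: lerD.
have tauh : forall tau, 0 <= tau <= 1 -> tau * `|h| <= s.
  by move=> tau /andP[ta tb]; rewrite -[s]mul1r ler_pM // normr_ge0.
have ballx : ball x0 Rr x by rewrite -z0; apply: inball; rewrite lexx ler01.
have opnmaj : forall tau, 0 <= tau <= 1 ->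
    opn tau <= df (tau * `|h| + `|x - x0|) - df `|x - x0|.
  move=> tau ht; have := tauh tau ht; move: (ht) => /andP[ta tb] th.
  have := Hmaj x (z tau) ballx (inball tau ht).
  by rewrite nzx ger0_norm //; apply; lra.
pose E tau := Finv (E_F F (z tau) x).
have Ulocal : forall tau, 0 <= tau <= 1 -> forall eps : K, 0 < eps -> exists2 d : K, 0 < d &
   forall r, `|r| < d -> `| `|E (tau + r)| - `|E tau| | <= `|r| * (`|h| * opn tau + eps).
  move=> tau ht eps eps0.
  have h1 : 0 < `|h| + 1 by have := normr_ge0 h; lra.
  set e' := eps / (MF * (`|h| + 1)).
  have e'0 : 0 < e' by rewrite divr_gt0 // mulr_gt0.
  have [d d0 Hd] := @DFexp K X Y F _ (dF tau ht) _ e'0.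
  exists (d / (`|h| + 1)); first by rewrite divr_gt0.
  move=> r hr.
  have kd : `|r *: h| < d.
    rewrite normrZ; move: hr; rewrite ltr_pdivlMr // => hr.
    apply: le_lt_trans hr; rewrite ler_wpM2l //; lra.
  have key : E_F F (z (tau + r)) x - E_F F (z tau) x =
      (F (z tau + r *: h) - (F (z tau) + 'd F (z tau) (r *: h))) +
      ('d F (z tau) (r *: h) - r *: 'd F x h).
    rewrite /E_F.
    have -> : z (tau + r) = z tau + r *: h by rewrite /z scalerDl addrA.
    have -> : z tau + r *: h - x = (tau + r) *: h.
      by rewrite /z; apply/eqP; rewrite subr_eq scalerDl (addrC _ x) addrA.
    have -> : z tau - x = tau *: h by rewrite /z addrC addKr.
    by rewrite !(linearZZ ('d F x)) scalerDl (zid _ _ _ _ _ _ ('d F (z tau) (r *: h))).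
  apply: (le_trans (ler_dist_dist _ _)).
  rewrite /E -FinvB key FinvD.
  apply: (le_trans (ler_normD _ _)).
  have HA := Hd _ kd.
  have HA2 : `|Finv (F (z tau + r *: h) - (F (z tau) + 'd F (z tau) (r *: h)))| <= `|r| * eps.
    apply: (le_trans (HMF _)).
    apply: (le_trans (ler_wpM2l (ltW MF0) HA)).
    rewrite normrZ /e'.
    have -> : MF * (eps / (MF * (`|h| + 1)) * (`|r| * `|h|)) = `|r| * eps * (`|h| / (`|h| + 1)).
      by field; rewrite !gt_eqF.
    rewrite -[X in _ <= X]mulr1 ler_wpM2l ?mulr_ge0 ?normr_ge0 ?ltW //.
    by rewrite ltr_pdivrMr // mul1r; lra.
  have HB2 : `|Finv ('d F (z tau) (r *: h) - r *: 'd F x h)| <= `|r| * (`|h| * opn tau).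
    rewrite linearZZ -scalerBr FinvZ normrZ; apply: ler_wpM2l => //.
    by rewrite mulrC; apply: opnle.
  by rewrite mulrDr [X in _ <= X]addrC; exact: (lerD HA2 HB2).
have fexp : forall p, 0 <= p < Rr -> forall eps : K, 0 < eps -> exists2 d : K, 0 < d &
    forall v, 0 <= v < Rr -> `|v - p| < d -> `|f v - f p - df p * (v - p)| <= eps * `|v - p|.
  by move=> p hp; exact: (@Dfb _ _ _ _ _ (Hfder p hp)).
have Finv0 : Finv 0 = 0 by rewrite -(scale0r (0:Y)) FinvZ scale0r.
have u0 : `|E 0| = 0.
  by rewrite /E /E_F z0 subrr linear0 addr0 subrr Finv0 normr0.
have u1 : `|E 1| = `|Finv (E_F F y x)| by rewrite /E z1.
have nh : 0 <= `|h| := normr_ge0 h.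
have hs : `|h| <= s by [].
have a0 : 0 <= `|x - x0| := normr_ge0 _.
have dfm := @gmono K Rr df h2inc.
have opnb : forall tau, 0 <= tau <= 1 ->
    opn tau <= df (t + tau * `|h|) - df t.
  move=> tau ht; move: (ht) => /andP[ta tb]; have th := tauh tau ht.
  apply: (le_trans (opnmaj tau ht)); rewrite (addrC (tau * `|h|)).
  apply: (@incr_mono K Rr df h2cvx) => //; first by rewrite mulr_ge0.
  lra.
split.
- pose v tau := f (t + tau * s) - tau * s * df t.
  have s1 : 0 < s + 1 by lra.
  have es : forall eps : K, 0 < eps -> eps / (s + 1) * s <= eps.
    move=> eps eps0; rewrite mulrAC ler_pdivrMr // ler_wpM2l ?ltW //; lra.
  have bnd1 : forall tau, 0 <= tau <= 1 ->
      `|h| * opn tau <= s * (df (t + tau * s) - df t).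
    move=> tau ht; move: (ht) => /andP[ta tb].
    have X0 : 0 <= df (t + tau * `|h|) - df t.
      have th0 : 0 <= tau * `|h| by rewrite mulr_ge0.
      have := tauh tau ht => th1.
      rewrite subr_ge0; apply: dfm; lra.
    apply: (le_trans (ler_wpM2l nh (opnb tau ht))).
    apply: (le_trans (ler_wpM2r X0 hs)).
    apply: ler_wpM2l => //; rewrite lerD2r.
    have th0 : 0 <= tau * `|h| by rewrite mulr_ge0.
    have th2 : tau * `|h| <= tau * s by rewrite ler_wpM2l.
    have : tau * s <= s by rewrite -[X in _ <= X]mul1r ler_wpM2r.
    move=> ?; apply: dfm; lra.
  have Hvr : forall tau, 0 <= tau -> tau < 1 -> forall eps : K, 0 < eps ->
      exists2 d : K, 0 < d & forall sg, tau < sg -> sg < tau + d ->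
      (sg - tau) * (`|h| * opn tau - eps) <= v sg - v tau.
    move=> tau ta tb eps eps0.
    have ts : tau * s <= s by rewrite -[X in _ <= X]mul1r ler_wpM2r // ltW.
    have hp : 0 <= t + tau * s < Rr.
      by apply/andP; split; [rewrite addr_ge0 // mulr_ge0 | lra].
    have e'0 : 0 < eps / (s + 1) by rewrite divr_gt0.
    have [d d0 Hd] := fexp _ hp _ e'0.
    exists (Num.min (d / (s + 1)) (1 - tau)).
      by rewrite lt_min divr_gt0 //= subr_gt0.
    move=> sg h1 h2.
    have m1 : Num.min (d / (s + 1)) (1 - tau) <= d / (s + 1) by rewrite ge_min lexx.
    have m2 : Num.min (d / (s + 1)) (1 - tau) <= 1 - tau by rewrite ge_min lexx orbT.
    have r0 : 0 < sg - tau by rewrite subr_gt0.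
    have rd : (sg - tau) * (s + 1) < d by rewrite -ltr_pdivlMr //; lra.
    have sg1 : sg <= 1 by lra.
    have hv' : 0 <= t + sg * s < Rr.
      have : sg * s <= s by rewrite -[X in _ <= X]mul1r ler_wpM2r.
      have : 0 <= sg * s by rewrite mulr_ge0 //; lra.
      by move=> ? ?; apply/andP; split; lra.
    have eqd : t + sg * s - (t + tau * s) = (sg - tau) * s by ring.
    have hd' : `|t + sg * s - (t + tau * s)| < d.
      rewrite eqd ger0_norm; last by rewrite mulr_ge0 // ltW.
      apply: le_lt_trans rd; apply: ler_wpM2l; [exact: ltW | lra].
    have rs0 : 0 <= (sg - tau) * s by rewrite mulr_ge0 // ltW.
    have := Hd _ hv' hd'; rewrite eqd (ger0_norm rs0) => Hf.
    have := ler_norm (- (f (t + sg * s) - f (t + tau * s) - df (t + tau * s) * ((sg - tau) * s))).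
    rewrite normrN => Hn.
    have P1 : (sg - tau) * (`|h| * opn tau) <= (sg - tau) * (s * (df (t + tau * s) - df t)).
      by apply: ler_wpM2l; [apply: ltW | apply: bnd1; rewrite ta ltW].
    have P2 : (sg - tau) * (eps / (s + 1) * s) <= (sg - tau) * eps.
      by apply: ler_wpM2l; [apply: ltW | apply: es].
    rewrite /v.
    have E2 : eps / (s + 1) * ((sg - tau) * s) = (sg - tau) * (eps / (s + 1) * s) by ring.
    rewrite E2 in Hf.
    lra.
  have Hvl : forall tau, 0 < tau -> tau <= 1 -> forall eta : K, 0 < eta ->
      exists2 d : K, 0 < d & forall sg, 0 <= sg -> tau - d < sg -> sg <= tau ->
      v sg - v tau < eta.
    move=> tau ta tb eta eta0.
    have ts : tau * s <= s by rewrite -[X in _ <= X]mul1r ler_wpM2r.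
    have ts0 : 0 <= tau * s by rewrite mulr_ge0 // ltW.
    have hp : 0 <= t + tau * s < Rr by apply/andP; split; lra.
    have e'0 : 0 < eta / (s + 1) by rewrite divr_gt0.
    have [d d0 Hd] := fexp _ hp _ e'0.
    exists (d / (s + 1)); first by rewrite divr_gt0.
    move=> sg sg0 h1 h2.
    have r0 : 0 <= tau - sg by rewrite subr_ge0.
    have rd : (tau - sg) * (s + 1) < d by rewrite -ltr_pdivlMr //; lra.
    have ss0 : 0 <= sg * s by rewrite mulr_ge0.
    have ss1 : sg * s <= tau * s by rewrite ler_wpM2r.
    have hv' : 0 <= t + sg * s < Rr by apply/andP; split; lra.
    have eqd : t + sg * s - (t + tau * s) = - ((tau - sg) * s) by ring.
    have rs0 : 0 <= (tau - sg) * s by rewrite mulr_ge0.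
    have hd' : `|t + sg * s - (t + tau * s)| < d.
      rewrite eqd normrN (ger0_norm rs0).
      apply: le_lt_trans rd; apply: ler_wpM2l => //; lra.
    have := Hd _ hv' hd'; rewrite eqd normrN (ger0_norm rs0) => Hf.
    have Hn := ler_norm (f (t + sg * s) - f (t + tau * s) - df (t + tau * s) * - ((tau - sg) * s)).
    have dtp : df t <= df (t + tau * s) by apply: dfm; lra.
    have P1 : (tau - sg) * s * (df t - df (t + tau * s)) <= 0.
      by rewrite mulr_ge0_le0 // subr_le0.
    have P2 : eta / (s + 1) * ((tau - sg) * s) <= eta / (s + 1) * s.
      by apply: ler_wpM2l; [apply: ltW | rewrite -[X in _ <= X]mul1r ler_wpM2r //; lra].
    have P3 : eta / (s + 1) * s < eta.
      by rewrite mulrAC ltr_pdivrMr // ltr_pM2l //; lra.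
    rewrite /v; lra.
  have := @MVI K (fun tau => `|E tau|) v (fun tau => `|h| * opn tau) Ulocal Hvr Hvl.
  rewrite /= u0 u1 /v /e_f !mul1r !mul0r addr0 subr0 subr0.
  have -> : t + s - t = s by ring.
  lra.
- move=> sn0.
  have sp : 0 < s by rewrite lt_neqAle eq_sym sn0 s0.
  set Kc := (df (s + t) - df t) / s.
  have Kc0 : 0 <= Kc.
    apply: divr_ge0; last exact: ltW.
    rewrite subr_ge0; apply: dfm; lra.
  have W0 : 0 <= Kc * `|h| ^+ 2 by rewrite mulr_ge0 // exprn_ge0.
  pose v tau := 2^-1 * Kc * (tau ^+ 2 * `|h| ^+ 2).
  have bnd2 : forall tau, 0 <= tau <= 1 -> `|h| * opn tau <= tau * (Kc * `|h| ^+ 2).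
    move=> tau ht; have th := tauh tau ht; move: (ht) => /andP[ta tb].
    have th0 : 0 <= tau * `|h| by rewrite mulr_ge0.
    have := @slope_le K Rr df h2cvx t (tau * `|h|) s t0 th0 th sp ltac:(lra).
    rewrite (addrC t s) -/Kc => Hs.
    apply: (le_trans (ler_wpM2l nh (opnb tau ht))).
    apply: (le_trans (ler_wpM2l nh Hs)).
    have -> : `|h| * (tau * `|h| * Kc) = tau * (Kc * `|h| ^+ 2) by rewrite expr2; ring.
    exact: lexx.
  have Hvr : forall tau, 0 <= tau -> tau < 1 -> forall eps : K, 0 < eps ->
      exists2 d : K, 0 < d & forall sg, tau < sg -> sg < tau + d ->
      (sg - tau) * (`|h| * opn tau - eps) <= v sg - v tau.
    move=> tau ta tb eps eps0; exists 1 => // sg h1 h2.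
    have r0 : 0 <= sg - tau by rewrite subr_ge0 ltW.
    have P : (sg - tau) * (`|h| * opn tau) <= (sg - tau) * (tau * (Kc * `|h| ^+ 2)).
      by apply: ler_wpM2l => //; apply: bnd2; rewrite ta ltW.
    have P' : 0 <= (sg - tau) * eps by rewrite mulr_ge0 // ltW.
    have Q : 0 <= Kc * `|h| ^+ 2 * (sg - tau) ^+ 2 by rewrite mulr_ge0 // exprn_ge0.
    rewrite /v; move: P P' Q; rewrite !expr2 => P P' Q; lra.
  have Hvl : forall tau, 0 < tau -> tau <= 1 -> forall eta : K, 0 < eta ->
      exists2 d : K, 0 < d & forall sg, 0 <= sg -> tau - d < sg -> sg <= tau ->
      v sg - v tau < eta.
    move=> tau ta tb eta eta0; exists 1 => // sg sg0 h1 h2.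
    have Q : 0 <= Kc * `|h| ^+ 2 * ((tau - sg) * (tau + sg)).
      by rewrite mulr_ge0 // mulr_ge0 // ?subr_ge0 // addr_ge0 // ltW.
    rewrite /v; move: Q; rewrite !expr2 => Q; lra.
  have := @MVI K (fun tau => `|E tau|) v (fun tau => `|h| * opn tau) Ulocal Hvr Hvl.
  rewrite /= u0 u1 /v expr1n expr0n /= !mul1r !mul0r mulr0 subr0 subr0.
  by [].
Qed.
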